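(* Let $(B,k)$ be an instance of the orthogonal buttons and scissors problem, with $B$ an $n\times m$ matrix, such that every row of $B$ contains at least one button, and such that there is no row block $X=[a,b]$ of $B$ and index $i_0\in X$ with the property that for every column $j$, either $B[X,\{j\}]$ contains no buttons, or both $B[[a,i_0-1],\{j\}]$ and $B[[i_0+1,b],\{j\}]$ contain at least $k$ buttons. If $n>(4k^2+1)(k+1)k(4k+6)^k$, then $(B,k)$ is a no-instance.
   Context: An instance of the orthogonal buttons and scissors problem is a pair $(B,k)$ where $B$ is an $n\times m$ matrix with nonnegative integer entries and $k$ is a nonnegative integer. Cell $(i,j)$ contains a button of color $c$ if $B[i,j]=c>0$, and no button if $B[i,j]=0$. A cut is either a horizontal cut (a sequence of consecutive cells in one row) or a vertical cut (a sequence of consecutive cells in one column). Cuts are applied one after another; a cut is valid at the moment it is applied if, among the buttons still present, its first and last cells contain buttons and all buttons in its cells have the same color. Applying a cut deletes all buttons in its cells. $(B,k)$ is a yes-instance if some sequence of at most $k$ cuts, each valid when applied, removes all buttons of $B$, and a no-instance otherwise. For a set of rows $X$ and set of columns $Y$, $B[X,Y]$ denotes the submatrix with entries $B[x,y]$, $x\in X$, $y\in Y$; $[a,b]$ denotes $\{a,\ldots,b\}$. A row block is a set $X$ of consecutive row indices such that for every column $j$, all buttons in $B[X,\{j\}]$ have the same color. *)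

(* Defs.v *)
From mathcomp Require Import all_boot all_algebra.
Set Implicit Arguments. Unset Strict Implicit. Unset Printing Implicit Defensive.

(* A board is an n x m matrix of nat; entry 0 = no button, c > 0 = button of color c.
   Rows/columns are 0-indexed ('I_n, 'I_m). *)

(* A cut: horizontal cut in row i between columns c1 and c2 (endpoints = first/last
   cell), or vertical cut in column j between rows r1 and r2. *)
Inductive cut (n m : nat) : Type :=
| HCut of 'I_n & 'I_m & 'I_m
| VCut of 'I_m & 'I_n & 'I_n.

Definition in_cut n m (c : cut n m) (i : 'I_n) (j : 'I_m) : bool :=
  match c with
  | HCut i0 c1 c2 => (i == i0) && (minn c1 c2 <= j <= maxn c1 c2)
  | VCut j0 r1 r2 => (j == j0) && (minn r1 r2 <= i <= maxn r1 r2)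
  end.

Definition first_cell n m (c : cut n m) : 'I_n * 'I_m :=
  match c with
  | HCut i0 c1 _ => (i0, c1)
  | VCut j0 r1 _ => (r1, j0)
  end.

Definition last_cell n m (c : cut n m) : 'I_n * 'I_m :=
  match c with
  | HCut i0 _ c2 => (i0, c2)
  | VCut j0 _ r2 => (r2, j0)
  end.

(* A state: predicate of cells still containing a button. *)
Definition state n m := 'I_n -> 'I_m -> bool.

Definition valid_cut n m (B : 'M[nat]_(n, m)) (P : state n m) (c : cut n m) : bool :=
  let f := first_cell c in
  let l := last_cell c in
  [&& P f.1 f.2, P l.1 l.2 &
      [forall i, forall j, (in_cut c i j && P i j) ==> (B i j == B f.1 f.2)]].

Definition apply_cut n m (P : state n m) (c : cut n m) : state n m :=
  fun i j => P i j && ~~ in_cut c i j.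

Fixpoint solves n m (B : 'M[nat]_(n, m)) (P : state n m) (s : seq (cut n m)) : bool :=
  match s with
  | [::] => [forall i, forall j, ~~ P i j]
  | c :: s' => valid_cut B P c && solves B (apply_cut P c) s'
  end.

Definition initial_state n m (B : 'M[nat]_(n, m)) : state n m := fun i j => 0 < B i j.

Definition yes_instance n m (B : 'M[nat]_(n, m)) (k : nat) : Prop :=
  exists s : seq (cut n m), size s <= k /\ solves B (initial_state B) s.

Definition row_block n m (B : 'M[nat]_(n, m)) (a b : nat) : Prop :=
  a <= b < n /\
  forall (j : 'I_m) (i i' : 'I_n), a <= i <= b -> a <= i' <= b ->
    0 < B i j -> 0 < B i' j -> B i j = B i' j.

Definition buttons_in_col n m (B : 'M[nat]_(n, m)) (lo hi : nat) (j : 'I_m) : nat :=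
  #|[set i : 'I_n | (lo <= i <= hi) && (0 < B i j)]|.

Definition bad_block n m (B : 'M[nat]_(n, m)) (k a b i0 : nat) : Prop :=
  row_block B a b /\ a <= i0 <= b /\
  forall j : 'I_m,
    buttons_in_col B a b j = 0 \/
    (k <= #|[set i : 'I_n | (a <= i < i0) && (0 < B i j)]| /\
     k <= buttons_in_col B i0.+1 b j).

(* Main.v *)
Require Import Defs.
From mathcomp Require Import all_boot all_algebra.
From mathcomp Require Import zify.
Set Implicit Arguments. Unset Strict Implicit. Unset Printing Implicit Defensive.

Lemma gap (p : pred nat) K l : forall a,
  count p (iota a (K * l.+1)) < K ->
  exists a', [/\ a <= a', a' + l <= a + K * l.+1 & count p (iota a' l) = 0].
Proof.
elim: K => [|K IH] a //.
rewrite mulSn iotaD count_cat.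
case E: (count p (iota a l) == 0).
  move=> _; exists a; split => //; [lia| exact/eqP].
have: 0 < count p (iota a l.+1).
  have: count p (iota a l) <= count p (iota a (l + 1)) by rewrite iotaD count_cat; lia.
  rewrite addn1; move/negbT: E; lia.
move=> H1 H2.
have [a' [h1 h2 h3]] : exists a', [/\ a + l.+1 <= a', a' + l <= a + l.+1 + K * l.+1 & count p (iota a' l) = 0].
  by apply: IH; lia.
exists a'; split => //; lia.
Qed.

Lemma card_count n (Q : pred nat) :
  #|[set i : 'I_n | Q i]| = count Q (iota 0 n).
Proof.
rewrite cardsE cardE /enum_mem size_filter -val_enum_ord count_map.
by rewrite -enumT; apply: eq_count => i.
Qed.

Lemma count_range (q : pred nat) lo hi n : hi <= n ->
  count (fun x => (lo <= x < hi) && q x) (iota 0 n) = count q (iota lo (hi - lo)).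
Proof.
move=> hn.
case: (leqP lo hi) => hlh; last first.
  have -> : hi - lo = 0 by lia.
  rewrite /= (eq_in_count (a2 := pred0)) ?count_pred0 // => x _ /=; apply/negbTE; lia.
have -> : n = lo + ((hi - lo) + (n - hi)) by lia.
rewrite !iotaD !count_cat add0n.
rewrite (eq_in_count (a1 := fun x => _ && _) (a2 := pred0) (s := iota 0 lo)); last first.
  by move=> x; rewrite mem_iota => H /=; apply/negbTE; lia.
rewrite (eq_in_count (a1 := fun x => _ && _) (a2 := pred0) (s := iota (lo + (hi - lo)) _)); last first.
  by move=> x; rewrite mem_iota => H /=; apply/negbTE; lia.
rewrite !count_pred0 add0n addn0.
apply: eq_in_count => x; rewrite mem_iota => H /=.
have -> : (lo <= x < hi) = true by apply/andP; split; lia.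
done.
Qed.

Fixpoint G k t := if t is t'.+1 then 2 * k * (G k t').+1 + 1 else 1.

Definition cnt m (bt : nat -> 'I_m -> bool) j lo hi := count (bt^~ j) (iota lo (hi - lo)).

Lemma count0_in (p : pred nat) a l i : count p (iota a l) = 0 -> a <= i < a + l -> ~~ p i.
Proof.
move=> H Hi; apply/negP => Pi.
have : has p (iota a l) by apply/hasP; exists i => //; rewrite mem_iota.
by rewrite has_count H.
Qed.

Lemma comb k m (bt : nat -> 'I_m -> bool) t : forall (A : {set 'I_m}) a L,
  #|A| <= t -> G k t <= L ->
  (forall i, a <= i < a + L -> exists j, bt i j) ->
  (forall i j, a <= i < a + L -> bt i j -> j \in A) ->
  exists a' b' i0, [/\ a <= a', a' <= i0, i0 < b', b' <= a + L &
   forall j, cnt bt j a' b' = 0 \/ (k <= cnt bt j a' i0 /\ k <= cnt bt j i0.+1 b')].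
Proof.
elim: t => [|t IH] A a L hA hL hrow hcol.
  move: hA; rewrite leqn0 => /eqP/cards0_eq hA0.
  have [j hj] := hrow a ltac:(simpl in hL; lia).
  by have := hcol a j ltac:(simpl in hL; lia) hj; rewrite hA0 inE.
have hL' : 2 * k * (G k t).+1 + 1 <= L by [].
move Eg: (G k t) hL' IH => g hL' IH.
move Eh: (k * g.+1) => h.
move Ei0: (a + h) => i0.
move Eb: (a + L) => b.
pose good j := (cnt bt j a b == 0) || ((k <= cnt bt j a i0) && (k <= cnt bt j i0.+1 b)).
case: (boolP [forall j, good j]) => [/forallP Hg | /forallPn [j Hj]].
  exists a, b, i0; split; try lia.
  move=> j; have := Hg j; rewrite /good => /orP [/eqP -> | /andP [H1 H2]]; [left|right] => //.
rewrite /good negb_or negb_and -!ltnNge in Hj.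
case/andP: Hj => Hnz Hlt.
have jA : j \in A.
  have : has (bt^~ j) (iota a (b - a)) by rewrite has_count lt0n.
  case/hasP => i; rewrite mem_iota => Hi Hb; apply: (hcol i) => //; lia.
have hA' : #|A :\ j| <= t by move: hA; rewrite (cardsD1 j A) jA add1n ltnS.
have sub : forall a', a <= a' -> a' + g <= a + L -> count (bt^~ j) (iota a' g) = 0 ->
  exists a'' b' i1, [/\ a <= a'', a'' <= i1, i1 < b', b' <= a + L &
   forall j, cnt bt j a'' b' = 0 \/ (k <= cnt bt j a'' i1 /\ k <= cnt bt j i1.+1 b')].
  move=> a' h1 h2 h3.
  have [a'' [b' [i1 [e1 e2 e3 e4 e5]]]] := IH (A :\ j) a' g hA' (leqnn _)
     ltac:(move=> i Hi; apply: hrow; lia)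
     ltac:(move=> i j' Hi Hb; rewrite !inE; apply/andP; split;
           [apply/eqP => E; subst j'; by move: (count0_in h3 Hi); rewrite Hb
           | apply: (hcol i) => //; lia]).
  exists a'', b', i1; split => //; lia.
case/orP: Hlt => Hlt.
  have Hlt1 : count (bt^~ j) (iota a (k * g.+1)) < k.
    by move: Hlt; rewrite /cnt; have -> : i0 - a = k * g.+1 by lia.
  have [a' [h1 h2 h3]] := gap Hlt1.
  rewrite -Eb; apply: (sub a') => //; lia.
have Hlt2 : count (bt^~ j) (iota i0.+1 (k * g.+1)) < k.
  move: Hlt; rewrite /cnt.
  have -> : b - i0.+1 = k * g.+1 + (b - i0.+1 - k * g.+1) by lia.
  rewrite iotaD count_cat; lia.
have [a' [h1 h2 h3]] := gap Hlt2.
rewrite -Eb; apply: (sub a') => //; lia.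
Qed.

Definition colof n m (c : cut n m) : option 'I_m :=
  match c with VCut j _ _ => Some j | _ => None end.

Definition isbp n m (c : cut n m) (x : nat) : bool :=
  match c with
  | HCut i0 _ _ => x == i0
  | VCut _ r1 r2 => (x == minn r1 r2) || (x == maxn r1 r2)
  end.

Lemma removal n m (B : 'M[nat]_(n, m)) s : forall (P : state n m) i j,
  solves B P s -> P i j -> exists c, List.In c s /\ in_cut c i j.
Proof.
elim: s => [|c s IH] P i j /=.
  by move=> /forallP /(_ i) /forallP /(_ j) /negP.
case/andP => _ Hs Pij.
case E: (in_cut c i j).
  by exists c; split => //; left.
have [c' [h1 h2]] := IH (apply_cut P c) i j Hs ltac:(by rewrite /apply_cut Pij E).
by exists c'; split => //; right.
Qed.

Lemma clean_color n m (B : 'M[nat]_(n, m)) (j : 'I_m) (S : pred 'I_n) s :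
  (forall c, List.In c s -> forall i i', S i -> S i' -> in_cut c i j = in_cut c i' j) ->
  forall (P : state n m), solves B P s ->
  forall i i', S i -> S i' -> P i j -> P i' j -> B i j = B i' j.
Proof.
elim: s => [|c s IH] Hcl P /=.
  by move=> /forallP H i i' _ _ Pi; move: (H i) => /forallP /(_ j); rewrite Pi.
case/andP => Hv Hs i i' Si Si' Pi Pi'.
case E: (in_cut c i j).
  have E' : in_cut c i' j by rewrite -(Hcl c (or_introl erefl) i i' Si Si').
  case/and3P: Hv => _ _ /forallP Hf.
  move: (Hf i) => /forallP /(_ j); rewrite E Pi /= => /eqP ->.
  by move: (Hf i') => /forallP /(_ j); rewrite E' Pi' /= => /eqP ->.
have E' : in_cut c i' j = false by rewrite -(Hcl c (or_introl erefl) i i' Si Si').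
apply: (IH _ (apply_cut P c)) => //.
- by move=> c' Hc'; apply: Hcl; right.
- by rewrite /apply_cut Pi E.
- by rewrite /apply_cut Pi' E'.
Qed.

Lemma In_has T (q : pred T) (s : seq T) c : List.In c s -> q c -> has q s.
Proof.
elim: s => [|d s IH] //= [-> -> //|H Hq]; by rewrite IH ?orbT.
Qed.

Lemma In_map T (U : eqType) (f : T -> U) (s : seq T) c : List.In c s -> f c \in map f s.
Proof.
elim: s => [|d s IH] //= [->|H]; rewrite inE; first by rewrite eqxx.
by rewrite IH ?orbT.
Qed.

Lemma count_predU_le T (a1 a2 : pred T) s : count (predU a1 a2) s <= count a1 s + count a2 s.
Proof. by rewrite -count_predUI leq_addr. Qed.

Lemma bp_count n m (s : seq (cut n m)) N :
  count (fun x => has (fun c => isbp c x) s) (iota 0 N) <= 2 * size s.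
Proof.
elim: s => [|c s IH] /=.
  by rewrite (eq_count (a2 := pred0)) ?count_pred0.
have H1 : count (isbp c) (iota 0 N) <= 2.
  case: c => [r c1 c2|j r1 r2] /=.
    have := count_uniq_mem (val r) (iota_uniq 0 N).
    by rewrite (eq_count (a2 := pred1 (val r))) // => ->; case: (_ \in _).
  rewrite (eq_count (a2 := predU (pred1 (minn r1 r2)) (pred1 (maxn r1 r2)))) //.
  apply: leq_trans (count_predU_le _ _ _) _.
  rewrite !count_uniq_mem ?iota_uniq //.
  by case: (_ \in _); case: (_ \in _).
rewrite (eq_count (a2 := predU (isbp c) (fun x => has (fun c => isbp c x) s))) //.
apply: leq_trans (count_predU_le _ _ _) _.
rewrite mulnS; lia.
Qed.

Definition bt n m (B : 'M[nat]_(n, m)) (x : nat) (j : 'I_m) : bool :=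
  [exists i : 'I_n, (val i == x) && (0 < B i j)].

Lemma btE n m (B : 'M[nat]_(n, m)) (i : 'I_n) j : bt B i j = (0 < B i j).
Proof.
apply/existsP/idP => [[i' /andP [/eqP /val_inj -> //]] | H].
by exists i; rewrite eqxx H.
Qed.

Lemma conv n m (B : 'M[nat]_(n, m)) j lo hi : hi <= n ->
  #|[set i : 'I_n | (lo <= i < hi) && (0 < B i j)]| = cnt (bt B) j lo hi.
Proof.
move=> hn.
rewrite /cnt -(count_range (bt B ^~ j) lo hn) -card_count.
by apply: eq_card => i; rewrite !inE btE.
Qed.

Lemma G_bound k t : (G k t).+1 <= 2 * (2 * k + 2) ^ t.
Proof.
elim: t => [|t IH] //=.
have : 0 < (2 * k + 2) ^ t by rewrite expn_gt0 addn2.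
rewrite expnS; move: IH; move: ((2 * k + 2) ^ t) => X; nia.
Qed.

Lemma bound k n : 0 < k -> (4 * k ^ 2 + 1) * (k + 1) * k * (4 * k + 6) ^ k < n ->
  (2 * k + 1) * (G k k).+1 <= n.
Proof.
move=> k0 hn; apply: leq_trans (ltnW hn).
apply: leq_trans (_ : (2 * k + 1) * (2 * (2 * k + 2) ^ k) <= _).
  by rewrite leq_mul2l G_bound orbT.
rewrite mulnA; apply: leq_mul.
  rewrite expnS expn1; nia.
by rewrite leq_exp2r //; lia.
Qed.

Lemma In_pmap T (U : eqType) (f : T -> option U) (s : seq T) c y :
  List.In c s -> f c = Some y -> y \in pmap f s.
Proof.
elim: s => [|d s IH] //= [<- ->|H E]; first by rewrite inE eqxx.
by case: (f d) => [z|]; rewrite ?inE IH ?orbT.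
Qed.

Unset Implicit Arguments.
Theorem mainTheorem4 (n m : nat) (B : 'M[nat]_(n, m)) (k : nat) :
  (forall i : 'I_n, exists j : 'I_m, 0 < B i j) ->
  ~ (exists a b i0 : nat, bad_block B k a b i0) ->
  (4 * k ^ 2 + 1) * (k + 1) * k * (4 * k + 6) ^ k < n ->
  ~ yes_instance B k.
Proof.
move=> Hrow Hbad Hn [s [Hs Hsol]].
case: (posnP k) => [k0 | kpos].
  subst k; move: Hs; rewrite leqn0 => /nilP Es; subst s.
  have n0 : 0 < n by lia.
  have [j Hj] := Hrow (Ordinal n0).
  by move: Hsol => /= /forallP /(_ (Ordinal n0)) /forallP /(_ j); rewrite /initial_state Hj.
have Hb := bound kpos Hn.
pose bp x := has (fun c => isbp c x) s.
have Hcount : count bp (iota 0 ((2 * k + 1) * (G k k).+1)) < 2 * k + 1.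
  by have := bp_count s ((2 * k + 1) * (G k k).+1); rewrite /bp; lia.
have [a0 [h1 h2 h3]] := gap Hcount.
move Eg: (G k k) Hb h2 h3 => g Hb h2 h3.
pose A := [set j in pmap (@colof n m) s].
have hA : #|A| <= k.
  rewrite cardsE; apply: leq_trans (card_size _) _.
  by rewrite size_pmap; apply: leq_trans (count_size _ _) Hs.
have nobp : forall x, a0 <= x < a0 + g -> ~~ bp x by move=> x Hx; apply: count0_in h3 Hx.
have Hbp : forall c, List.In c s -> forall x, isbp c x -> ~~ (a0 <= x < a0 + g).
  move=> c Hc x Hx; apply/negP => Hr.
  by move: (nobp x Hr); rewrite /bp (In_has (q := fun c => isbp c x) Hc Hx).
have Hcol : forall i j, a0 <= i < a0 + g -> bt B i j -> j \in A.
  move=> i j Hi /existsP [i' /andP [/eqP Ei Hij]].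
  have [c [Hc Hcut]] := removal (P := initial_state B) Hsol Hij.
  move: Hcut (Hbp c Hc).
  case: c Hc => [r c1 c2 | j0 r1 r2] Hc /=.
    by move=> /andP [/eqP Er _] /(_ i); rewrite -Er Ei eqxx /= => /(_ isT); rewrite Hi.
  move=> /andP [/eqP Ej _] _; rewrite /A inE; apply: (In_pmap Hc); rewrite Ej //.
have Hrw : forall i, a0 <= i < a0 + g -> exists j, bt B i j.
  move=> i Hi; have Hin : i < n by lia.
  have [j Hj] := Hrow (Ordinal Hin); exists j.
  by rewrite -(btE B (Ordinal Hin)) in Hj.
have [a' [b' [i0 [e1 e2 e3 e4 e5]]]] := comb (t := k) hA (eq_leq Eg) Hrw Hcol.
apply: Hbad; exists a', b'.-1, i0; split; last split.
- split; first lia.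
  move=> j i i' Hi Hi' Bi Bi'.
  apply: (@clean_color n m B j (fun i : 'I_n => a0 <= i < a0 + g) s _ (initial_state B) Hsol) => //; try lia.
  move=> c Hc x y Hx Hy.
  move: (Hbp c Hc); case: c Hc => [r c1 c2 | j0 r1 r2] Hc /= Hb'.
    have Hr := Hb' r; rewrite eqxx in Hr.
    have -> : (x == r) = false by apply/negbTE/eqP => E; subst; move: (Hr isT); rewrite Hx.
    have -> : (y == r) = false by apply/negbTE/eqP => E; subst; move: (Hr isT); rewrite Hy.
    done.
  have L1 := Hb' (minn r1 r2); rewrite eqxx /= in L1; have {}L1 := L1 isT.
  have L2 := Hb' (maxn r1 r2); rewrite eqxx orbT in L2; have {}L2 := L2 isT.
  move: L1 L2; move: (minn r1 r2) (maxn r1 r2) => lo hi L1 L2.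
  congr (_ && _); apply/idP/idP; lia.
- lia.
- move=> j; rewrite /buttons_in_col.
  have E1 : forall lo, #|[set i : 'I_n | (lo <= i <= b'.-1) && (0 < B i j)]| = cnt (bt B) j lo b'.
    move=> lo; rewrite -conv; last lia.
    by apply: eq_card => i; rewrite !inE; congr (_ && _); congr (_ && _); apply/idP/idP; lia.
  rewrite !E1 conv; last lia.
  exact: e5.
Qed.
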